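(* Let $X$ be a random vector in $\mathbb{R}^n$, let $m\ge1$ be an integer and let $x\in\mathcal{C}_m(X)$. Then, for any norm $\|\cdot\|$ on $\mathbb{R}^n$, $$\mathbb{E}\left[\frac{1}{\|X-x\|^m}\right]=+\infty.$$
   Context: For a random vector $X$ in $\mathbb{R}^n$ and an integer $m\ge0$, the $m$-dimensional mould $\mathcal{C}_m(X)$ is the set of all $x\in\mathbb{R}^n$ such that $\liminf_{\epsilon\to0^+}\mathbb{P}(\|X-x\|_2<\epsilon)/\epsilon^m>0$ (this set does not change if $\|\cdot\|_2$ is replaced by any other norm on $\mathbb{R}^n$). *)

(* Defs.v *)
From HB Require Import structures.
From mathcomp Require Import all_boot all_order all_algebra.
From mathcomp Require Import all_classical all_reals all_analysis.
Set Implicit Arguments. Unset Strict Implicit. Unset Printing Implicit Defensive.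
Import Order.TTheory GRing.Theory Num.Theory.
Import numFieldTopology.Exports numFieldNormedType.Exports.
Local Open Scope classical_set_scope.
Local Open Scope ring_scope.

Definition norm2 (R : realType) (n : nat) (v : 'rV[R]_n) : R :=
  Num.sqrt (\sum_(i < n) v ord0 i ^+ 2).

Definition is_norm (R : realType) (n : nat) (N : 'rV[R]_n -> R) : Prop :=
  [/\ (forall v, N v = 0 -> v = 0),
      (forall (a : R) v, N (a *: v) = `|a| * N v) &
      (forall u v, N (u + v) <= N u + N v)].

Definition random_vector d (T : measurableType d) (R : realType) (n : nat)
  (X : T -> 'rV[R]_n) : Prop :=
  forall i : 'I_n, measurable_fun setT (fun t => X t ord0 i).

Definition mould d (T : measurableType d) (R : realType)
  (P : probability T R) (n : nat) (X : T -> 'rV[R]_n) (m : nat) : set 'rV[R]_n :=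
  [set x | (0 < limf_einf
              (fun eps : R => (P [set t | (norm2 (X t - x) < eps)%R]
                                / (eps ^+ m)%:E)%E) (0%R)^'+)%E].

(* Main.v *)
Set Warnings "-all".
Require Import Defs.
From HB Require Import structures.
From mathcomp Require Import all_boot all_order all_algebra.
From mathcomp Require Import all_classical all_reals all_analysis.
From mathcomp Require Import lra ring.
Import Order.TTheory GRing.Theory Num.Theory.
Import HBNNSimple.
Local Open Scope classical_set_scope.
Local Open Scope ring_scope.

Lemma mould_lb d (T : measurableType d) (R : realType)
  (P : probability T R) (n : nat) (X : T -> 'rV[R]_n) (m : nat) (x : 'rV[R]_n) :
  x \in mould P X m -> exists dl c : R, [/\ 0 < dl, 0 < c &
   forall eps, 0 < eps -> eps < dl ->
     ((c * eps ^+ m)%:E <= P [set t | (norm2 (X t - x) < eps)%R])%E].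
Proof.
rewrite inE /mould /= limf_einfE => /ereal_sup_gt [_ [V hV <-] hinf].
have [c [c0 hc]] : exists c : R, 0 < c /\ (c%:E <= ereal_inf
   [set (P [set t | (norm2 (X t - x) < eps)%R] / (eps ^+ m)%:E)%E | eps in V])%E.
  move: hinf; set I := ereal_inf _; case: I => [r| |] //= hr.
  - by exists r; split => //; rewrite -lte_fin.
  - by exists 1; split => //; rewrite leey.
move: hV; rewrite /at_right /within /= => /nbhs_ballP [e e0 he].
exists e, c; split => // eps eps0 epse.
have Veps : V eps.
  apply: (he eps) => //; rewrite /ball /= sub0r normrN gtr0_norm //.
have := le_trans hc (ereal_inf_lbound (ex_intro2 _ _ eps Veps erefl)).
have em0 : 0 < eps ^+ m by rewrite exprn_gt0.
rewrite /= -(invrK (eps ^+ m)) (_ : (P _ / _)%E = (P [set t | (norm2 (X t - x) < eps)%R] * ((eps ^+ m)^-1)^-1^-1%:E)%E); last first.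
  by rewrite invrK inver gt_eqF.
by rewrite lee_pdivlMr ?invr_gt0 // invrK EFinM.
Qed.
Lemma norm_ge0' (R : realType) n (N : 'rV[R]_n -> R) : is_norm N -> forall v, 0 <= N v.
Proof.
case=> _ hZ hD v.
have N0 : N 0 = 0 by rewrite -(scale0r (0 : 'rV[R]_n)) hZ normr0 mul0r.
have := hD v (- v); rewrite subrr N0.
have -> : - v = (-1) *: v by rewrite scaleN1r.
by rewrite hZ normrN normr1 mul1r => h; lra.
Qed.

Lemma coord_le_norm2 (R : realType) n (v : 'rV[R]_n) j : `|v ord0 j| <= norm2 v.
Proof.
rewrite /norm2 -sqrtr_sqr ler_sqrt ?sumr_ge0 // => [|i _]; last exact: sqr_ge0.
by rewrite (bigD1 j) //= lerDl sumr_ge0 // => i _; exact: sqr_ge0.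
Qed.

Lemma norm_bound (R : realType) n (N : 'rV[R]_n -> R) : is_norm N ->
  exists2 C, 0 < C & forall v, N v <= C * norm2 v.
Proof.
move=> hN; have N0 := @norm_ge0' _ _ _ hN; case: hN => _ hZ hD.
have N00 : N 0 = 0 by rewrite -(scale0r (0 : 'rV[R]_n)) hZ normr0 mul0r.
have Nsum : forall (s : seq 'I_n) f, N (\sum_(i <- s) f i) <= \sum_(i <- s) N (f i).
  elim => [|a s IH] f; first by rewrite !big_nil N00.
  by rewrite !big_cons (le_trans (hD _ _)) // lerD2l.
exists (1 + \sum_(j < n) N (delta_mx ord0 j)).
  by rewrite ltr_pwDl // sumr_ge0.
move=> v; rewrite {1}(matrix_sum_delta v) big_ord1.
apply: (le_trans (Nsum _ _)).
apply: (@le_trans _ _ (\sum_(j < n) norm2 v * N (delta_mx ord0 j))).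
  apply: ler_sum => j _; rewrite hZ ler_wpM2r //.
  by rewrite (_ : ord0 = 0) // coord_le_norm2.
rewrite -mulr_sumr mulrC ler_wpM2r //.
  by rewrite /norm2 sqrtr_ge0.
by rewrite lerDr.
Qed.

Lemma mball d (T : measurableType d) (R : realType) n (X : T -> 'rV[R]_n) (x : 'rV[R]_n) eps :
  random_vector X -> 0 < eps -> measurable [set t | norm2 (X t - x) < eps].
Proof.
move=> mX e0.
have -> : [set t | norm2 (X t - x) < eps] =
  setT `&` (fun t => \sum_(i < n) (X t - x) ord0 i ^+ 2) @^-1` `]-oo, eps ^+ 2[.
  have key a : Num.sqrt a < eps = (a < eps ^+ 2).
    by rewrite -[X in _ < X](gtr0_norm e0) -sqrtr_sqr ltr_sqrt // exprn_gt0.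
  by apply/seteqP; split => t /=; rewrite /norm2 in_itv /= key //; case.
have mf : measurable_fun setT (fun t => \sum_(i < n) (X t - x) ord0 i ^+ 2).
  apply: measurable_sum => i.
  under eq_fun do rewrite !mxE.
  apply: measurable_realfun.measurable_funX; apply: measurable_realfun.measurable_funB => //.
by apply: mf => //; exact: measurable_itv.
Qed.
Section G.
Context d (T : measurableType d) (R : realType).
Variables (A : nat -> set T) (mA : forall k, measurable (A k)).
Variables (b : nat -> R) (b0 : forall k, 0 <= b k).

Fixpoint Gs (K : nat) : {nnsfun T >-> R} :=
  match K with
  | 0 => nnsfun0
  | K.+1 => add_nnsfun (Gs K) (scale_nnsfun (indic_nnsfun R (mA K.+1)) (b0 K))
  end.

Lemma GsS K t : Gs K.+1 t = Gs K t + b K * \1_(A K.+1) t.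
Proof. by []. Qed.

Lemma Gs0 t : Gs 0 t = 0.
Proof. by []. Qed.

Lemma sintegral_GsS (mu : {measure set T -> \bar R}) K :
  sintegral mu (Gs K.+1) = (sintegral mu (Gs K) + (b K)%:E * mu (A K.+1))%E.
Proof.
rewrite [Gs K.+1]/= /add_nnsfun sintegralD; congr (_ + _)%E.
by rewrite /scale_nnsfun /mul_nnsfun sintegralrM /= sintegral_indic.
Qed.

Lemma sintegral_Gs0 (mu : {measure set T -> \bar R}) : sintegral mu (Gs 0) = 0%E.
Proof. exact: sintegral0. Qed.
End G.

Lemma half_bound (R : realType) (m : nat) : (1 <= m)%N -> (2^-1 : R) <= 1 - 2^-1 ^+ m.
Proof.
case: m => // m' _; rewrite exprS.
have h2 : 0 <= 2^-1 :> R by rewrite invr_ge0.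
have h1 : 2^-1 ^+ m' <= 1 :> R by apply: exprn_ile1 => //; lra.
have : (2^-1 : R) * 2^-1 ^+ m' <= 2^-1 by rewrite ler_piMr.
lra.
Qed.

Lemma key_id (R : realType) (m : nat) (c e : R) : 0 < e ->
  (e^-1 ^+ m - (2 * e)^-1 ^+ m) * (c * e ^+ m) = c * (1 - 2^-1 ^+ m).
Proof.
move=> e0; rewrite invfM exprMn.
have ha : e^-1 ^+ m * e ^+ m = 1 by rewrite -exprMn mulVf ?gt_eqF // expr1n.
set a := e^-1 ^+ m; set p := 2^-1 ^+ m; set E := e ^+ m.
transitivity (c * (1 - p) * (a * E)); first ring.
by rewrite ha mulr1.
Qed.

Theorem mainTheorem4 (d : measure_display) (T : measurableType d) (R : realType)
  (P : probability T R) (n : nat) (X : T -> 'rV[R]_n) (m : nat)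
  (x : 'rV[R]_n) (N : 'rV[R]_n -> R) :
  random_vector X -> (1 <= m)%N -> x \in mould P X m -> is_norm N ->
  (\int[P]_t (((N (X t - x)) ^+ m)%:E)^-1 = +oo)%E.
Proof.
move=> mX m1 hx hN.
have N0 := @norm_ge0' _ _ _ hN.
have [C C0 hC] := @norm_bound _ _ _ hN.
have [dl [c [dl0 c0 hc]]] := @mould_lb _ _ _ _ _ _ _ _ hx.
pose eps k := dl / 2 ^+ k.+1.
have eps0 k : 0 < eps k by rewrite divr_gt0 // exprn_gt0.
have epsS k : eps k.+1 = eps k / 2.
  by rewrite /eps exprS invfM mulrA mulrC mulrA [X in X * _]mulrC.
have epsdl k : eps k < dl.
  elim: k => [|k IH]; first by rewrite /eps expr1 ltr_pdivrMr //; lra.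
  by rewrite epsS (le_lt_trans _ IH) // ler_pdivrMr //; have := eps0 k; lra.
pose u k := (eps k)^-1 ^+ m.
have u0 k : 0 <= u k by rewrite exprn_ge0 // invr_ge0 ltW.
have uS k : u k.+1 = 2 ^+ m * u k.
  by rewrite /u epsS invfM invrK mulrC exprMn.
have b0 k : 0 <= u k.+1 - u k.
  rewrite uS subr_ge0 ler_peMl // exprn_ege1 //; lra.
pose A k := [set t | norm2 (X t - x) < eps k].
have mA k : measurable (A k) := @mball _ _ _ _ _ _ _ mX (eps0 k).
pose G := @Gs _ _ _ _ mA _ b0.
have GS K t : G K.+1 t = G K t + (u K.+1 - u K) * \1_(A K.+1) t by [].
have G0 t : G 0%N t = 0 by [].
have half := @half_bound R m m1.
have sG K : ((K%:R * (c / 2))%:E <= sintegral P (G K))%E.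
  elim: K => [|K IH]; first by rewrite /G /= sintegral0 mul0r.
  rewrite sintegral_GsS.
  rewrite -/G (_ : K.+1%:R * (c / 2) = K%:R * (c / 2) + c / 2); last first.
    by rewrite -addn1 natrD mulrDl mul1r.
  rewrite EFinD leeD //.
  apply: (@le_trans _ _ ((u K.+1 - u K)%:E * (c * eps K.+1 ^+ m)%:E)%E); last first.
    by rewrite lee_wpmul2l // ?lee_fin //; exact: hc.
  rewrite -EFinM lee_fin.
  have -> : (u K.+1 - u K) * (c * eps K.+1 ^+ m) = c * (1 - 2^-1 ^+ m).
    have e0 := eps0 K.+1.
    have hK : eps K = 2 * eps K.+1 by rewrite epsS mulrC -mulrA mulVf ?mulr1.
    rewrite /u hK; exact: key_id.
  by rewrite ler_wpM2l // ltW.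
have clA K t : G K t <= u K - u 0%N.
  elim: K => [|K IH]; first by rewrite G0 subrr.
  rewrite GS indicE; case: (t \in A K.+1) => /=.
    by rewrite mulr1; move: IH; lra.
  by rewrite mulr0 addr0 (le_trans IH) // lerD2r; have := b0 K; lra.
have clB K t : 0 < norm2 (X t - x) ->
    G K t + u 0%N <= Num.max (u 0%N) ((norm2 (X t - x))^-1 ^+ m).
  move=> r0; elim: K => [|K IH]; first by rewrite G0 add0r le_max lexx.
  rewrite GS indicE; case: (boolP (t \in A K.+1)) => /= hA; last first.
    by rewrite mulr0 addr0.
  rewrite mulr1 le_max; apply/orP; right.
  apply: (@le_trans _ _ (u K.+1)); first by have := clA K t; lra.
  rewrite /u lerXn2r ?nnegrE ?invr_ge0 ?ltW //.
  rewrite ltf_pV2 ?posrE //.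
  by move: hA; rewrite inE.
have clC K t : 0 < norm2 (X t - x) -> G K t <= (norm2 (X t - x))^-1 ^+ m.
  move=> r0; have := clB K t r0; have := u0 0%N.
  have : 0 <= (norm2 (X t - x))^-1 ^+ m by rewrite exprn_ge0 // invr_ge0 ltW.
  set a := u 0%N; set y := _ ^+ m; move=> y0 a0.
  rewrite /Num.max; case: ifP => _; lra.
pose w := C^-1 ^+ m.
have w0 : 0 <= w by rewrite exprn_ge0 // invr_ge0 ltW.
pose H K := scale_nnsfun (G K) w0.
have hH K t : ((H K t)%:E <= ((N (X t - x) ^+ m)%:E)^-1)%E.
  rewrite (_ : H K t = w * G K t) //.
  case: (eqVneq (N (X t - x)) 0) => [->|Nn0].
    have -> : (0:R) ^+ m = 0 by rewrite expr0n eqn0Ngt m1.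
    by rewrite inve0 leey.
  have Npos : 0 < N (X t - x) by rewrite lt0r Nn0 N0.
  have r0 : 0 < norm2 (X t - x).
    by have := lt_le_trans Npos (hC _); rewrite pmulr_rgt0.
  rewrite inver expf_eq0 (negbTE Nn0) andbF lee_fin.
  apply: le_trans (ler_wpM2l w0 (clC K t r0)) _.
  rewrite /w -exprMn -invfM exprVn lef_pV2 ?posrE ?exprn_gt0 ?mulr_gt0 //.
  by apply: lerXn2r; rewrite ?nnegrE ?(ltW Npos) ?mulr_ge0 ?(ltW C0) ?(ltW r0) ?hC.
rewrite ge0_integralTE /=; last by move=> t; rewrite inve_ge0 lee_fin exprn_ge0.
set S := ereal_sup _.
have lb K : ((w * (K%:R * (c/2)))%:E <= S)%E.
  have : [set sintegral P h | h in [set h : {nnsfun T >-> R} | forall t, ((h t)%:E <= ((N (X t - x) ^+ m)%:E)^-1)%E]]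
     (sintegral P (H K)).
    by exists (H K) => // t; exact: hH.
  move=> /ereal_sup_ubound; apply: le_trans.
  rewrite /H /scale_nnsfun /mul_nnsfun sintegralrM EFinM lee_wpmul2l ?lee_fin //.
have wc : 0 < w * (c / 2) by rewrite mulr_gt0 ?divr_gt0 // exprn_gt0 // invr_gt0.
move: lb; case: S => [r| |] // lb.
  have r0 : 0 <= r by rewrite -lee_fin (le_trans _ (lb 0%N)) // mul0r mulr0.
  have := lb (Num.Def.archi_bound (r / (w * (c / 2)))).
  have := archi_boundP (divr_ge0 r0 (ltW wc)).
  set k := (Num.Def.archi_bound _)%:R => hk.
  rewrite lee_fin mulrCA => hk2.
  have : r < k * (w * (c / 2)) by rewrite -ltr_pdivrMr.
  by rewrite ltNge hk2.
by have := lb 0%N.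
Qed.
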